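(* Let $\lambda$ and $g$ be as in the context and let $j\ge0$ be an integer. Then \[ \left[(-\lambda)g\right]^{j}\circ g(x)=g\!\left((-\lambda)^{j}x\right) \] for all $x$ with $-\lambda^{-j}\le x\le\lambda^{-j}$, where $\left[(-\lambda)g\right]^{j}$ is the $j$-fold composition of the map $x\mapsto(-\lambda)g(x)$.
   Context: There is a unique constant $\lambda=2.5029\ldots$ and a unique infinitely (period-doubling) renormalizable analytic unimodal map $g:[-1,1]\to[-1,1]$ solving $g(x)=-\lambda\, g^{2}(-x/\lambda)$ for $-1\le x\le1$ ($g^2=g\circ g$). Unimodal means: $-1$ is the unique fixed point with positive multiplier, $g(1)=-1$, and $g$ has a unique maximum at an interior nondegenerate critical point. Moreover $g$ is analytic near $[-1,1]$ and even. *)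

(* Defs.v *)
From Stdlib Require Import Reals.
From Coquelicot Require Import Coquelicot.
Open Scope R_scope.

Definition analytic_near_unit_interval (g : R -> R) : Prop :=
  exists eps : R, 0 < eps /\
    forall x0 : R, Rabs x0 < 1 + eps ->
      exists (r : R) (a : nat -> R), 0 < r /\
        forall x : R, Rabs (x - x0) < r -> is_pseries a (x - x0) (g x).

Definition maps_unit_interval (g : R -> R) : Prop :=
  forall x : R, -1 <= x <= 1 -> -1 <= g x <= 1.

Definition unimodal (g : R -> R) : Prop :=
  (g (-1) = -1 /\ 0 < Derive g (-1) /\
   forall x : R, -1 <= x <= 1 -> g x = x -> 0 < Derive g x -> x = -1) /\
  g 1 = -1 /\
  exists c : R, -1 < c < 1 /\
    Derive g c = 0 /\ Derive_n g 2 c <> 0 /\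
    forall x : R, -1 <= x <= 1 -> x <> c -> g x < g c.

Definition feigenbaum_eq (lambda : R) (g : R -> R) : Prop :=
  forall x : R, -1 <= x <= 1 -> g x = - lambda * g (g (- x / lambda)).

Definition even_fun (g : R -> R) : Prop := forall x : R, g (- x) = g x.

Definition scaled_iter (lambda : R) (g : R -> R) (j : nat) : R -> R :=
  Nat.iter j (fun y => (- lambda) * g y).

(* Main.v *)
Require Import Defs.
From Stdlib Require Import Reals Lra.
From Coquelicot Require Import Coquelicot.
Open Scope R_scope.

Lemma step (lambda : R) (g : R -> R) (Hl : 1 < lambda)
  (Hfeig : feigenbaum_eq lambda g) (z : R) (Hz : - / lambda <= z <= / lambda) :
  - lambda * g (g z) = g (- lambda * z).
Proof.
  assert (Hy : -1 <= - lambda * z <= 1).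
  { assert (lambda * / lambda = 1) by (field; lra).
    split; nra. }
  rewrite (Hfeig _ Hy).
  replace (- (- lambda * z) / lambda) with z by (field; lra). reflexivity.
Qed.

Theorem mainTheorem8 (lambda : R) (g : R -> R)
  (Hlam : 2.5029 < lambda < 2.5030)
  (Hmaps : maps_unit_interval g)
  (Hfeig : feigenbaum_eq lambda g)
  (Hunim : unimodal g)
  (Hanal : analytic_near_unit_interval g)
  (Heven : even_fun g)
  (j : nat) (x : R)
  (Hx : - / lambda ^ j <= x <= / lambda ^ j) :
  scaled_iter lambda g j (g x) = g ((- lambda) ^ j * x).
Proof.
  unfold scaled_iter.
  revert x Hx; induction j as [|j IH]; intros x Hx.
  - simpl. f_equal. ring.
  - rewrite Nat.iter_succ_r.
    assert (Hp : 0 < lambda ^ j) by (apply pow_lt; lra).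
    assert (Hz : - / lambda <= x * lambda ^ j <= / lambda).
    { simpl in Hx. rewrite Rinv_mult in Hx.
      assert (/ lambda ^ j * lambda ^ j = 1) by (field; lra).
      assert (0 < / lambda) by (apply Rinv_0_lt_compat; lra).
      split; nra. }
    assert (Hxl : - / lambda <= x <= / lambda).
    { assert (1 <= lambda ^ j) by (apply pow_R1_Rle; lra).
      assert (0 < / lambda) by (apply Rinv_0_lt_compat; lra).
      split; nra. }
    rewrite (step lambda g ltac:(lra) Hfeig x Hxl).
    rewrite IH.
    + f_equal. simpl. ring.
    + simpl in Hx. rewrite Rinv_mult in Hx.
      assert (0 < / lambda ^ j) by (apply Rinv_0_lt_compat; lra).
      assert (lambda * / lambda = 1) by (field; lra).
      split; nra.
Qed.
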